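(* Consider the two-sided market model described in the context with $\phi(x)=x^\theta$ for some $0<\theta<1$, and suppose $a>\zeta$, where $$\zeta=\max\Big\{\tfrac{1}{2}\big(\tfrac{\gamma-2}{\gamma-1}\phi'(\bar Yx_0)+\lambda\big)\bar X,\ \tfrac{1}{2}\big(\textstyle\int_{x_0}^{\infty}\phi'(x\bar Y)x^{1-\gamma}dx+\lambda \bar X\big)\Big\}.$$ Let $y^*>y_0$ be the revenue-maximizing CP threshold, i.e. the solution of $g(y^* )=a$, and let $\widehat y>y_0$ be the welfare-maximizing CP threshold, i.e. the solution of $h(\widehat y)=a$. Then $\widehat y<y^*$.
   Context: Model: fix $\gamma>2$, $\beta>2$, $\lambda>0$, $a\ge0$. Consumer types have density $x^{-\gamma}$ on $x\ge x_0:=(\frac{1}{\gamma-1})^{\frac{1}{\gamma-1}}$, CP types density $y^{-\beta}$ on $y\ge y_0:=(\frac{1}{\beta-1})^{\frac{1}{\beta-1}}$. Let $Y(s)=\int_s^\infty y^{1-\beta}dy$, $\bar X=\int_{x_0}^\infty x^{1-\gamma}dx$, $\bar Y=Y(y_0)$. Define for $y\ge y_0$: $g(y)=\frac12\big(\frac{\gamma-2}{\gamma-1}\phi'(x_0\sqrt{\bar Y Y(y)})+\lambda\big)\frac{\bar X\sqrt{\bar Y}}{\sqrt{Y(y)}}$ and $h(y)=\frac12\big(\int_{x_0}^\infty\phi'(x\sqrt{\bar Y Y(y)})x^{1-\gamma}dx+\lambda\bar X\big)\frac{\sqrt{\bar Y}}{\sqrt{Y(y)}}$. Interpretation: with all consumers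 participating and CPs of type $\ge y$ participating, $g(y)=a$ is the first-order condition for the ISP's revenue $\phi(x_0\sqrt{\bar YY(y)})+\lambda\bar X\sqrt{\bar Y Y(y)}-aY(y)$ (membership fee and CP fee set so threshold types are indifferent), and $h(y)=a$ is the first-order condition for the social welfare $\int_{x_0}^\infty\phi(x\sqrt{\bar YY(y)})x^{-\gamma}dx+\lambda\bar X\sqrt{\bar YY(y)}-aY(y)$. Both $g$ and $h$ are increasing in $y$. *)

(* Defs.v *)
From Stdlib Require Import Reals.
From Coquelicot Require Import Coquelicot.
Open Scope R_scope.

Definition Iinf (f : R -> R) (s : R) : R :=
  RInt_gen f (at_point s) (Rbar_locally p_infty).

(* lower endpoints of the type distributions *)
Definition x0 (gamma : R) : R := Rpower (1 / (gamma - 1)) (1 / (gamma - 1)).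
Definition y0 (beta : R) : R := Rpower (1 / (beta - 1)) (1 / (beta - 1)).

Definition Yf (beta s : R) : R := Iinf (fun y => Rpower y (1 - beta)) s.
Definition Xbar (gamma : R) : R := Iinf (fun x => Rpower x (1 - gamma)) (x0 gamma).
Definition Ybar (beta : R) : R := Yf beta (y0 beta).

Definition dphi (phi : R -> R) (x : R) : R := Derive phi x.

Definition g_fun (phi : R -> R) (gamma beta lambda y : R) : R :=
  / 2 * ((gamma - 2) / (gamma - 1)
           * dphi phi (x0 gamma * sqrt (Ybar beta * Yf beta y)) + lambda)
      * (Xbar gamma * sqrt (Ybar beta) / sqrt (Yf beta y)).

Definition h_fun (phi : R -> R) (gamma beta lambda y : R) : R :=
  / 2 * (Iinf (fun x => dphi phi (x * sqrt (Ybar beta * Yf beta y))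
                          * Rpower x (1 - gamma)) (x0 gamma)
         + lambda * Xbar gamma)
      * (sqrt (Ybar beta) / sqrt (Yf beta y)).

Definition zeta (phi : R -> R) (gamma beta lambda : R) : R :=
  Rmax (/ 2 * ((gamma - 2) / (gamma - 1) * dphi phi (Ybar beta * x0 gamma) + lambda)
            * Xbar gamma)
       (/ 2 * (Iinf (fun x => dphi phi (x * Ybar beta) * Rpower x (1 - gamma)) (x0 gamma)
               + lambda * Xbar gamma)).

(* Main.v *)
Require Import Defs.
From Stdlib Require Import Reals Lra.
From Coquelicot Require Import Coquelicot.
Open Scope R_scope.

Lemma rpow_derive q x : q <> 0 -> 0 < x -> is_derive (fun t => / q * Rpower t q) x (Rpower x (q - 1)).
Proof.
  intros Hq Hx.
  assert (H := derivable_pt_lim_power x q Hx).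
  apply is_derive_Reals in H.
    replace (Rpower x (q-1)) with (/q * (q * Rpower x (q-1))) by (field; auto).
    apply (is_derive_scal (fun t => Rpower t q)). exact H.
Qed.

Lemma lim_rpow q : q < 0 -> filterlim (fun t => / q * Rpower t q) (Rbar_locally p_infty) (locally 0).
Proof.
  intro Hq.
  assert (H1 : is_lim (fun t => q * ln t) p_infty m_infty).
  { assert (H:= is_lim_scal_l _ q _ _ is_lim_ln_p).
    replace (Rbar_mult q p_infty) with m_infty in H. exact H.
    simpl. unfold Rbar_mult. simpl. destruct (Rle_dec 0 q) as [h|h]. exfalso; apply (Rle_not_lt _ _ h Hq). reflexivity. }
  assert (H2 : is_lim (fun t => exp (q * ln t)) p_infty 0).
  { eapply is_lim_comp. apply is_lim_exp_m. exact H1. exists 0. intros; discriminate. }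
  assert (H3 := is_lim_scal_l _ (/q) _ _ H2).
  unfold Rpower. replace (Rbar_mult (/q) 0) with (Finite 0) in H3 by (simpl; f_equal; ring).
  exact H3.
Qed.
Lemma is_Iinf_pow s p : 0 < s -> p < -1 ->
  is_RInt_gen (fun x => Rpower x p) (at_point s) (Rbar_locally p_infty) (- (/ (p+1) * Rpower s (p+1))).
Proof.
  intros Hs Hp.
  set (q := p + 1).
  assert (Hq : q < 0) by (unfold q; lra).
  assert (Hq0 : q <> 0) by lra.
  set (F := fun t => / q * Rpower t q).
  assert (Hfp : filter_prod (at_point s) (Rbar_locally p_infty)
     (fun ab : R * R => fst ab = s /\ s < snd ab)).
  { exists (fun a => a = s) (fun b => s < b).
    - reflexivity.
    - exists s. auto.
    - intros a b Ha Hb. simpl. auto. }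
  assert (HD : forall x, 0 < x -> Derive F x = Rpower x p).
  { intros x Hx. apply is_derive_unique. replace p with (q - 1) by (unfold q; ring). apply rpow_derive; auto. }
  apply (is_RInt_gen_ext (Derive F)).
  { eapply filter_imp; [|exact Hfp]. intros [a b] [Ha Hb] x Hx. simpl in *. subst a.
    rewrite Rmin_left in Hx by lra. apply HD. lra. }
  replace (- (/ q * Rpower s q)) with (0 - F s) by (unfold F; ring).
  apply (is_RInt_gen_Derive F (F s) 0).
  - eapply filter_imp; [|exact Hfp]. intros [a b] [Ha Hb] x Hx. simpl in *. subst a.
    rewrite Rmin_left in Hx by lra. eexists. apply rpow_derive; auto. lra.
  - eapply filter_imp; [|exact Hfp]. intros [a b] [Ha Hb] x Hx. simpl in *. subst a.
    rewrite Rmin_left in Hx by lra.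
    apply (continuous_ext_loc _ (fun t => Rpower t p)).
    + assert (Hx0 : 0 < x) by lra.
      exists (mkposreal x Hx0). intros y Hy. symmetry. apply HD.
      apply Rabs_lt_between' in Hy. simpl in Hy. lra.
    + apply (@ex_derive_continuous R_AbsRing R_NormedModule (fun t => Rpower t p) x). eexists. apply is_derive_Reals. apply derivable_pt_lim_power. lra.
  - intros P HP. unfold filtermap, at_point. exact (locally_singleton _ _ HP).
  - apply lim_rpow. exact Hq.
Qed.

Lemma Iinf_pow s p : 0 < s -> p < -1 ->
  Iinf (fun x => Rpower x p) s = - (/ (p+1) * Rpower s (p+1)).
Proof.
  intros. unfold Iinf. apply is_RInt_gen_unique. apply is_Iinf_pow; auto.
Qed.

Lemma is_Iinf_ext (f g : R -> R) s (l : R) : (forall x, s < x -> f x = g x) ->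
  is_RInt_gen f (at_point s) (Rbar_locally p_infty) l ->
  is_RInt_gen g (at_point s) (Rbar_locally p_infty) l.
Proof.
  intros Hfg H. apply (is_RInt_gen_ext f); [|exact H].
  exists (fun a => a = s) (fun b => s < b).
  - reflexivity.
  - exists s. auto.
  - intros a b Ha Hb x Hx. simpl in *. subst a. rewrite Rmin_left in Hx by lra.
    apply Hfg. lra.
Qed.

Lemma Rpower_pos x c : 0 < Rpower x c.
Proof. unfold Rpower. apply exp_pos. Qed.

Lemma Rpower_neg_decr a b c : 0 < a <= b -> c <= 0 -> Rpower b c <= Rpower a c.
Proof.
  intros [Ha Hab] Hc. unfold Rpower.
  assert (ln a <= ln b).
  { destruct (Req_dec a b). subst; lra. apply Rlt_le, ln_increasing; lra. }
  destruct (Req_dec (c * ln b) (c * ln a)) as [E|E]. rewrite E; lra.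
  apply Rlt_le, exp_increasing. nra.
Qed.

Lemma dphi_pow th z : 0 < z -> dphi (fun x => Rpower x th) z = th * Rpower z (th - 1).
Proof.
  intro Hz. unfold dphi. apply is_derive_unique. apply is_derive_Reals.
  apply derivable_pt_lim_power. exact Hz.
Qed.

Lemma Yf_val beta y : 2 < beta -> 0 < y -> Yf beta y = - (/ (2 - beta) * Rpower y (2 - beta)).
Proof.
  intros Hb Hy. unfold Yf. rewrite Iinf_pow; auto; try lra.
  replace (1 - beta + 1) with (2 - beta) by ring. reflexivity.
Qed.

Lemma Yf_pos beta y : 2 < beta -> 0 < y -> 0 < Yf beta y.
Proof.
  intros Hb Hy. rewrite Yf_val; auto.
  assert (0 < / (beta - 2)) by (apply Rinv_0_lt_compat; lra).
  assert (Hp := Rpower_pos y (2 - beta)).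
  replace (/ (2 - beta)) with (- / (beta - 2)) by (field; lra). nra.
Qed.

Lemma Yf_decr beta y1 y2 : 2 < beta -> 0 < y1 <= y2 -> Yf beta y2 <= Yf beta y1.
Proof.
  intros Hb Hy. rewrite !Yf_val; try lra.
  assert (0 < / (beta - 2)) by (apply Rinv_0_lt_compat; lra).
  assert (Rpower y2 (2 - beta) <= Rpower y1 (2 - beta)) by (apply Rpower_neg_decr; lra).
  replace (/ (2 - beta)) with (- / (beta - 2)) by (field; lra). nra.
Qed.

Lemma y0_pos beta : 0 < y0 beta.
Proof. apply Rpower_pos. Qed.
Lemma x0_pos gamma : 0 < x0 gamma.
Proof. apply Rpower_pos. Qed.

Theorem theorem4 (gamma beta lambda a theta ystar yhat : R) :
  2 < gamma -> 2 < beta -> 0 < lambda -> 0 <= a ->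
  0 < theta < 1 ->
  let phi := fun x : R => Rpower x theta in
  a > zeta phi gamma beta lambda ->
  y0 beta < ystar -> g_fun phi gamma beta lambda ystar = a ->
  y0 beta < yhat -> h_fun phi gamma beta lambda yhat = a ->
  yhat < ystar.
Proof.
  intros Hg Hb Hl Ha Ht phi _ Hys Hgs Hyh Hhh.
  set (X0 := x0 gamma). assert (HX0 : 0 < X0) by apply x0_pos.
  assert (HXb : Xbar gamma = - (/ (2 - gamma) * Rpower X0 (2 - gamma))).
  { unfold Xbar. rewrite Iinf_pow; auto; try lra. fold X0.
    replace (1 - gamma + 1) with (2 - gamma) by ring. reflexivity. }
  set (A := theta * Rpower X0 (theta + 1 - gamma)).
  assert (HA : 0 < A) by (unfold A; assert (H := Rpower_pos X0 (theta + 1 - gamma)); nra).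
  set (Yb := Ybar beta).
  assert (HYb : 0 < Yb) by (unfold Yb, Ybar; apply (Yf_pos beta (y0 beta) Hb (y0_pos beta))).
  set (S := fun y => sqrt (Yb * Yf beta y)).
  set (K := fun y => sqrt Yb / sqrt (Yf beta y)).
  set (P := fun y => Rpower (S y) (theta - 1)).
  assert (HS : forall y, 0 < y -> 0 < S y).
  { intros y Hy. unfold S. apply sqrt_lt_R0. apply Rmult_lt_0_compat; [exact HYb|apply Yf_pos; auto]. }
  assert (Gform : forall y, 0 < y ->
     g_fun phi gamma beta lambda y = /2 * (A / (gamma - 1) * P y + lambda * Xbar gamma) * K y).
  { intros y Hy. unfold g_fun. fold X0 Yb. change (sqrt (Yb * Yf beta y)) with (S y).
    unfold phi. rewrite dphi_pow by (apply Rmult_lt_0_compat; [exact HX0|apply HS; exact Hy]).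
    rewrite <- Rpower_mult_distr by (auto).
    unfold P, K, A. rewrite HXb.
    replace (theta + 1 - gamma) with ((theta - 1) + (2 - gamma)) by ring.
    rewrite Rpower_plus.
    assert (0 < sqrt (Yf beta y)) by (apply sqrt_lt_R0, Yf_pos; [exact Hb|exact Hy]).
    field. repeat split; lra. }
  assert (Hform : forall y, 0 < y ->
     h_fun phi gamma beta lambda y = /2 * (A / (gamma - 1 - theta) * P y + lambda * Xbar gamma) * K y).
  { intros y Hy. unfold h_fun. fold X0 Yb. change (sqrt (Yb * Yf beta y)) with (S y).
    assert (HSy := HS y Hy).
    assert (HI : Iinf (fun x => dphi phi (x * S y) * Rpower x (1 - gamma)) X0
                 = theta * Rpower (S y) (theta - 1) * - (/ (theta - gamma + 1) * Rpower X0 (theta - gamma + 1))).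
    { unfold Iinf. apply is_RInt_gen_unique.
      apply (is_Iinf_ext (fun x => scal (theta * Rpower (S y) (theta - 1)) (Rpower x (theta - gamma)))).
      - intros x Hx. unfold phi. rewrite dphi_pow by (apply Rmult_lt_0_compat; lra).
        rewrite <- Rpower_mult_distr by lra.
        replace (theta - gamma) with ((theta - 1) + (1 - gamma)) by ring.
        change (scal (theta * Rpower (S y) (theta - 1)) (Rpower x (theta - 1 + (1 - gamma)))) with ((theta * Rpower (S y) (theta - 1)) * Rpower x (theta - 1 + (1 - gamma))).
        rewrite Rpower_plus. ring.
      - change (theta * Rpower (S y) (theta - 1) * - (/ (theta - gamma + 1) * Rpower X0 (theta - gamma + 1))) with (scal (theta * Rpower (S y) (theta - 1)) (- (/ (theta - gamma + 1) * Rpower X0 (theta - gamma + 1)))).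
        apply (is_RInt_gen_scal (fun x => Rpower x (theta - gamma))). apply is_Iinf_pow; [exact HX0|lra]. }
    rewrite HI. unfold P, K, A.
    replace (theta - gamma + 1) with (theta + 1 - gamma) by ring.
    assert (0 < sqrt (Yf beta y)) by (apply sqrt_lt_R0, Yf_pos; [exact Hb|exact Hy]).
    field. repeat split; lra. }
  destruct (Rlt_or_le yhat ystar) as [H|H]; [exact H|exfalso].
  assert (Hy0 := y0_pos beta).
  rewrite Gform in Hgs by lra. rewrite Hform in Hhh by lra.
  assert (HYd : Yf beta yhat <= Yf beta ystar) by (apply Yf_decr; lra).
  assert (HYh := Yf_pos beta yhat Hb ltac:(lra)).
  assert (HSd : S yhat <= S ystar).
  { unfold S; apply sqrt_le_1_alt. apply Rmult_le_compat_l; lra. }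
  assert (HPd : P ystar <= P yhat) by (unfold P; apply Rpower_neg_decr; [split; [apply HS|]|]; lra).
  assert (HKd : K ystar <= K yhat).
  { unfold K. unfold Rdiv. apply Rmult_le_compat_l. apply sqrt_pos.
    apply Rinv_le_contravar. apply sqrt_lt_R0; exact HYh. apply sqrt_le_1_alt; exact HYd. }
  assert (HK : 0 < K ystar).
  { unfold K. apply Rdiv_lt_0_compat; [apply sqrt_lt_R0; exact HYb | apply sqrt_lt_R0, Yf_pos; lra]. }
  assert (HP : 0 < P yhat) by apply Rpower_pos.
  assert (HXp : 0 < Xbar gamma).
  { rewrite HXb. assert (0 < / (gamma - 2)) by (apply Rinv_0_lt_compat; lra).
    assert (Hp := Rpower_pos X0 (2 - gamma)).
    replace (- (/ (2 - gamma) * Rpower X0 (2 - gamma))) with (/ (gamma - 2) * Rpower X0 (2 - gamma)) by (field; lra).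
    apply Rmult_lt_0_compat; assumption. }
  assert (Hc : A / (gamma - 1) < A / (gamma - 1 - theta)).
  { unfold Rdiv. apply Rmult_lt_compat_l; [exact HA|]. apply Rinv_lt_contravar; [|lra].
    apply Rmult_lt_0_compat; lra. }
  assert (Hc0 : 0 < A / (gamma - 1)) by (apply Rdiv_lt_0_compat; lra).
  set (u1 := A / (gamma - 1) * P ystar + lambda * Xbar gamma) in *.
  set (u2 := A / (gamma - 1) * P yhat + lambda * Xbar gamma).
  set (u3 := A / (gamma - 1 - theta) * P yhat + lambda * Xbar gamma) in *.
  assert (H12 : u1 <= u2) by (unfold u1, u2; apply Rplus_le_compat_r, Rmult_le_compat_l; lra).
  assert (H23 : u2 < u3) by (unfold u2, u3; apply Rplus_lt_compat_r, Rmult_lt_compat_r; [exact HP|exact Hc]).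
  assert (Hu1 : 0 < u1).
  { unfold u1. apply Rplus_le_lt_0_compat.
    - apply Rmult_le_pos; [lra| apply Rlt_le, Rpower_pos].
    - apply Rmult_lt_0_compat; assumption. }
  assert (E1 : u1 * K ystar <= u2 * K yhat) by (apply Rmult_le_compat; lra).
  assert (E2 : u2 * K yhat < u3 * K yhat) by (apply Rmult_lt_compat_r; lra).
  lra.
Qed.
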